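(* Let $H$ be obtained from $E_{20}$ by adding a new vertex $v$ and joining it to three distinct vertices of $E_{20}$; let $S$ be the set of these three neighbours. If either every two vertices of $S$ are adjacent in $E_{20}$, or no two vertices of $S$ are adjacent in $E_{20}$, then $H$ contains $K_{3,4}$ or $F_4$ as a minor.
   Context: $E_{20}$ is the graph with vertex set $\{e^0,e^1_1,e^1_2,e^1_3,e^2,e^3_1,e^3_2,e^3_3,e^4\}$ and the 16 edges $e^0e^2$; $e^0e^1_i$ ($i=1,2,3$); $e^1_1e^1_2$, $e^1_2e^1_3$, $e^1_3e^1_1$; and, for $i=1,2,3$, $e^1_ie^3_i$, $e^2e^3_i$, $e^4e^3_i$. $F_4$ is the graph with vertex set $\{f^1,f^2\}\cup\{f^i_j: i\in\{1,2\}, j\in\{1,2,3,4\}\}$ and the 16 edges: for each $i\in\{1,2\}$, $f^if^i_1$, $f^if^i_2$, $f^if^i_4$, $f^i_3f^i_1$, $f^i_3f^i_2$, $f^i_3f^i_4$; and $f^1_jf^2_{5-j}$ for $j=1,2,3,4$. *)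

(* Defs.v *)
From mathcomp Require Import all_boot.
Set Implicit Arguments. Unset Strict Implicit. Unset Printing Implicit Defensive.

Definition adj_of_edges (n : nat) (es : seq (nat * nat)) : rel 'I_n :=
  fun x y => ((x : nat, y : nat) \in es) || ((y : nat, x : nat) \in es).

(* E_20 on 'I_9 with the encoding
   e^0 = 0, e^1_1 = 1, e^1_2 = 2, e^1_3 = 3, e^2 = 4,
   e^3_1 = 5, e^3_2 = 6, e^3_3 = 7, e^4 = 8. *)
Definition E20_edges : seq (nat * nat) :=
  [:: (0,4);
      (0,1); (0,2); (0,3);
      (1,2); (2,3); (3,1);
      (1,5); (2,6); (3,7);
      (4,5); (4,6); (4,7);
      (8,5); (8,6); (8,7)].
Definition E20_adj : rel 'I_9 := @adj_of_edges 9 E20_edges.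

(* F_4 on 'I_10 with the encoding
   f^1 = 0, f^2 = 1, f^1_j = 1 + j (j = 1..4), f^2_j = 5 + j (j = 1..4). *)
Definition F4_edges : seq (nat * nat) :=
  [:: (0,2); (0,3); (0,5); (4,2); (4,3); (4,5);
      (1,6); (1,7); (1,9); (8,6); (8,7); (8,9);
      (2,9); (3,8); (4,7); (5,6)].                (* f^1_j f^2_{5-j} *)
Definition F4_adj : rel 'I_10 := @adj_of_edges 10 F4_edges.

Definition K34_adj : rel 'I_7 := fun x y => (x < 3) != (y < 3).

Definition H_adj (S : {set 'I_9}) : rel (option 'I_9) :=
  fun x y =>
    match x, y with
    | Some a, Some b => E20_adj a b
    | None, Some b => b \in S
    | Some a, None => a \in S
    | None, None => false
    end.

Definition connected_in (T : finType) (e : rel T) (A : {set T}) : Prop :=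
  forall u v, u \in A -> v \in A ->
    connect [rel a b | [&& a \in A, b \in A & e a b]] u v.

Definition is_minor (G : finType) (eG : rel G) (T : finType) (eH : rel T) : Prop :=
  exists f : G -> {set T},
    [/\ forall x, f x != set0,
        forall x y, x != y -> [disjoint f x & f y],
        forall x, connected_in eH (f x)
      & forall x y, eG x y -> exists u v, [/\ u \in f x, v \in f y & eH u v]].

(* Main.v *)
Require Import Defs.
From mathcomp Require Import all_boot.
Set Implicit Arguments. Unset Strict Implicit. Unset Printing Implicit Defensive.

Definition code (v : option 'I_9) : nat := if v is Some a then val a else 9.
Definition bset (l : seq nat) : {set option 'I_9} := [set v | code v \in l].
Definition mkf (n : nat) (bs : seq (seq nat)) (x : 'I_n) := bset (nth [::] bs x).
Definition S_of (l : seq nat) : {set 'I_9} := [set x : 'I_9 | val x \in l].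

Definition adjn (a b : nat) := ((a, b) \in E20_edges) || ((b, a) \in E20_edges).
Definition hadjn (l : seq nat) (a b : nat) :=
  if a == 9 then (b != 9) && (b \in l)
  else if b == 9 then a \in l else adjn a b.

Lemma H_adjE l u v : H_adj (S_of l) u v = hadjn l (code u) (code v).
Proof.
case: u => [a|]; case: v => [b|] //=; rewrite /hadjn ?in_set /=.
- by rewrite (ltn_eqF (ltn_ord a)) (ltn_eqF (ltn_ord b)).
- by rewrite (ltn_eqF (ltn_ord a)).
- by rewrite (ltn_eqF (ltn_ord b)).
Qed.

Definition crel (l : seq nat) (bx : seq nat) : rel (option 'I_9) :=
  [rel a b | [&& code a \in bx, code b \in bx & hadjn l (code a) (code b)]].

Definition Bn (G : finType) (es : seq G) (bs : seq (seq nat)) (x : G) := nth [::] bs (index x es).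

Definition ords7 : seq 'I_7 := [:: @Ordinal 7 0 isT; @Ordinal 7 1 isT; @Ordinal 7 2 isT; @Ordinal 7 3 isT; @Ordinal 7 4 isT; @Ordinal 7 5 isT; @Ordinal 7 6 isT].
Definition ords9 : seq 'I_9 := [:: @Ordinal 9 0 isT; @Ordinal 9 1 isT; @Ordinal 9 2 isT; @Ordinal 9 3 isT; @Ordinal 9 4 isT; @Ordinal 9 5 isT; @Ordinal 9 6 isT; @Ordinal 9 7 isT; @Ordinal 9 8 isT].
Definition ords10 : seq 'I_10 := [:: @Ordinal 10 0 isT; @Ordinal 10 1 isT; @Ordinal 10 2 isT; @Ordinal 10 3 isT; @Ordinal 10 4 isT; @Ordinal 10 5 isT; @Ordinal 10 6 isT; @Ordinal 10 7 isT; @Ordinal 10 8 isT; @Ordinal 10 9 isT].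

Lemma ords7P x : x \in ords7.
Proof. by case: x => [[|[|[|[|[|[|[|m]]]]]]] hm]. Qed.
Lemma ords9P x : x \in ords9.
Proof. by case: x => [[|[|[|[|[|[|[|[|[|m]]]]]]]]] hm]. Qed.
Lemma ords10P x : x \in ords10.
Proof. by case: x => [[|[|[|[|[|[|[|[|[|[|m]]]]]]]]]] hm]. Qed.

Definition V : seq (option 'I_9) := None :: map Some ords9.

Definition rstep (e : rel (option 'I_9)) (A : seq (option 'I_9)) :=
  A ++ [seq y <- V | has (fun x => e x y) A].

Definition reach (e : rel (option 'I_9)) u v := v \in iter 10 (rstep e) [:: u].

Lemma reachP e u v : reach e u v -> connect e u v.
Proof.
rewrite /reach; elim: 10 v => [|k IH] v /=.
  by rewrite inE => /eqP ->; apply: connect0.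
rewrite {1}/rstep mem_cat => /orP [/IH //|].
rewrite mem_filter => /andP [/hasP [x hx exy] _].
by apply: connect_trans (IH x hx) (connect1 exy).
Qed.

Definition minor_n (G : finType) (es : seq G) (eG : rel G) (bs : seq (seq nat)) (l : seq nat) :=
  [&& all (fun x => has (fun u => code u \in Bn es bs x) V) es,
      all (fun x => all (fun y => (x != y) ==> all (fun u => (code u \in Bn es bs x) ==> (code u \notin Bn es bs y)) V) es) es,
      all (fun x => all (fun u => all (fun v => (code u \in Bn es bs x) ==> (code v \in Bn es bs x) ==>
          reach (crel l (Bn es bs x)) u v) V) V) es
    & all (fun x => all (fun y => eG x y ==>
          has (fun u => has (fun v => [&& code u \in Bn es bs x, code v \in Bn es bs y & hadjn l (code u) (code v)]) V) V) es) es].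

Lemma minor_nP (G : finType) (es : seq G) (eG : rel G) bs l :
  (forall x, x \in es) -> minor_n es eG bs l -> is_minor eG (H_adj (S_of l)).
Proof.
move=> hes.
have hV : forall u, u \in V.
  case=> [a|]; rewrite /V ?mem_head //; rewrite in_cons; apply/orP; right; apply/mapP; exists a => //; apply: ords9P.
case/and4P=> /allP h1 /allP h2 /allP h3 /allP h4.
exists (fun x => bset (Bn es bs x)); split.
- move=> x; case/hasP: (h1 x (hes x)) => u _ hu; apply/set0Pn; exists u; by rewrite in_set.
- move=> x y xy; move/allP: (h2 x (hes x)) => /(_ y (hes y)) /implyP /(_ xy) /allP h.
  rewrite disjoint_subset; apply/subsetP => u; rewrite !inE => hx.
  by move/implyP: (h u (hV u)) => /(_ hx).
- move=> x u v; rewrite !in_set => hu hv.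
  move/allP: (h3 x (hes x)) => /(_ u (hV u)) /allP /(_ v (hV v)) /implyP /(_ hu) /implyP /(_ hv) /reachP.
  rewrite (@eq_connect _ _ (crel l (Bn es bs x))) // => a b /=; by rewrite !in_set H_adjE.
- move=> x y hxy; move/allP: (h4 x (hes x)) => /(_ y (hes y)) /implyP /(_ hxy)
    /hasP [u _ /hasP [v _ /and3P [a b c]]].
  by exists u, v; rewrite !in_set H_adjE.
Qed.

Definition table (s : seq nat) : bool * seq (seq nat) :=
  match s with
  | [:: 0; 1; 2] => (true, [:: [:: 8]; [:: 9]; [:: 5]; [:: 7]; [:: 4]; [:: 6]; [:: 2]; [:: 0]; [:: 3]; [:: 1]])
  | [:: 0; 1; 3] => (true, [:: [:: 8]; [:: 9]; [:: 5]; [:: 6]; [:: 4]; [:: 7]; [:: 3]; [:: 0]; [:: 2]; [:: 1]])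
  | [:: 0; 2; 3] => (true, [:: [:: 8]; [:: 9]; [:: 6]; [:: 5]; [:: 4]; [:: 7]; [:: 3]; [:: 0]; [:: 1]; [:: 2]])
  | [:: 0; 5; 6] => (false, [:: [:: 5]; [:: 6]; [:: 0; 3]; [:: 4]; [:: 9]; [:: 1; 2]; [:: 7; 8]])
  | [:: 0; 5; 7] => (false, [:: [:: 5]; [:: 7]; [:: 0; 2]; [:: 4]; [:: 9]; [:: 1; 3]; [:: 6; 8]])
  | [:: 0; 6; 7] => (false, [:: [:: 6]; [:: 7]; [:: 0; 1]; [:: 4]; [:: 9]; [:: 2; 3]; [:: 5; 8]])
  | [:: 1; 2; 3] => (false, [:: [:: 1; 5]; [:: 2; 6]; [:: 3; 7]; [:: 0]; [:: 4]; [:: 8]; [:: 9]])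
  | [:: 1; 4; 8] => (false, [:: [:: 4]; [:: 8]; [:: 1; 2]; [:: 5]; [:: 6]; [:: 9]; [:: 3; 7]])
  | [:: 1; 6; 7] => (false, [:: [:: 6]; [:: 7]; [:: 1; 5]; [:: 4]; [:: 8]; [:: 9]; [:: 2; 3]])
  | [:: 2; 4; 8] => (false, [:: [:: 4]; [:: 8]; [:: 1; 2]; [:: 5]; [:: 6]; [:: 9]; [:: 3; 7]])
  | [:: 2; 5; 7] => (false, [:: [:: 5]; [:: 7]; [:: 2; 6]; [:: 4]; [:: 8]; [:: 9]; [:: 1; 3]])
  | [:: 3; 4; 8] => (false, [:: [:: 4]; [:: 8]; [:: 1; 2; 3]; [:: 5]; [:: 6]; [:: 7]; [:: 9]])
  | [:: 3; 5; 6] => (false, [:: [:: 5]; [:: 6]; [:: 3; 7]; [:: 4]; [:: 8]; [:: 9]; [:: 1; 2]])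
  | [:: 5; 6; 7] => (false, [:: [:: 5]; [:: 6]; [:: 3; 7]; [:: 4]; [:: 8]; [:: 9]; [:: 1; 2]])
  | _ => (false, [::])
  end.

Definition keys : seq (seq nat) :=
  [:: [:: 0; 1; 2]; [:: 0; 1; 3]; [:: 0; 2; 3]; [:: 0; 5; 6]; [:: 0; 5; 7];
      [:: 0; 6; 7]; [:: 1; 2; 3]; [:: 1; 4; 8]; [:: 1; 6; 7]; [:: 2; 4; 8];
      [:: 2; 5; 7]; [:: 3; 4; 8]; [:: 3; 5; 6]; [:: 5; 6; 7]].

Definition good (k : seq nat) : bool :=
  let w := table k in
  if w.1 then minor_n ords10 F4_adj w.2 k else minor_n ords7 K34_adj w.2 k.

Definition condn (l : seq nat) :=
  all (fun a => all (fun b => (a != b) ==> adjn a b) l) l ||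
  all (fun a => all (fun b => ~~ adjn a b) l) l.

Definition check1 :=
  all (fun a => all (fun b => all (fun c =>
    (uniq [:: a; b; c] && condn [:: a; b; c]) ==> (sort leq [:: a; b; c] \in keys))
    (iota 0 9)) (iota 0 9)) (iota 0 9).

Lemma check1_ok : check1.
Proof. vm_compute. reflexivity. Qed.

Lemma check2_ok : all good keys.
Proof. vm_compute. reflexivity. Qed.

Lemma iota_ok a : a < 9 -> a \in iota 0 9.
Proof. by move=> h; rewrite mem_iota add0n leq0n h. Qed.

Theorem lemma4p5 (S : {set 'I_9}) :
  #|S| = 3 ->
  ((forall x y, x \in S -> y \in S -> x != y -> E20_adj x y) \/
   (forall x y, x \in S -> y \in S -> ~~ E20_adj x y)) ->
  is_minor K34_adj (H_adj S) \/ is_minor F4_adj (H_adj S).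
Proof.
move=> hS hc.
set l := [seq val x | x <- enum S].
have hSl : S = S_of l.
  by apply/setP => x; rewrite in_set /l (mem_map val_inj) mem_enum.
have hsz : size l = 3 by rewrite size_map -cardE hS.
have hlt : all (fun a => a < 9) l by apply/allP => a /mapP [x _ ->]; exact: ltn_ord.
have hu : uniq l by rewrite (map_inj_uniq val_inj) enum_uniq.
have hcond : condn l.
  rewrite /condn; case: hc => h; apply/orP; [left|right];
    apply/allP => a /mapP [x hx ->]; apply/allP => b /mapP [y hy ->];
    rewrite mem_enum in hx; rewrite mem_enum in hy.
    apply/implyP => hxy; have hne : x != y by apply: contraNneq hxy => ->.
    exact: (h x y hx hy hne).
  exact: (h x y hx hy).
clearbody l.
have hk : sort leq l \in keys.
  move: hsz hlt hu hcond; case: l {hSl} => [|a [|b [|c [|]]]] //= _ /and4P [ha hb hc' _] hu hcond.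
  have H1 := check1_ok; rewrite /check1 in H1.
  have H2 := allP H1 a (iota_ok ha).
  have H3 := allP H2 b (iota_ok hb).
  have H4 := allP H3 c (iota_ok hc').
  move/implyP: H4.
  by apply; apply/andP; split.
have hSk : S = S_of (sort leq l).
  by rewrite hSl; apply/setP => x; rewrite !in_set mem_sort.
rewrite hSk.
move: (allP check2_ok _ hk); rewrite /good; case: (table _) => [[] bs] /= h; [right|left].
  exact: minor_nP ords10P h.
exact: minor_nP ords7P h.
Qed.
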